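(* Fix a shift $G$ for a nonempty configuration. In one outer iteration of the inter-level sampler, the probability that level $\ell$ is accepted (returned) is exactly $W_\ell2^G/A(G)$. Consequently, the probability that the outer iteration accepts some level is $M(G)/A(G)$.
   Context: Fix an integer $b\ge 2$. There is a set $\mathcal L$ of $N$ levels, which are consecutive integers. Each level $\ell$ holds a finite (possibly empty) multiset of normalized significands, each an integer in $[2^{b-1},2^b)$. Let $z$ be the total number of stored significands over all levels; assume $z<2^b$. For each level, $SS_\ell$ is the sum of its significands (so $SS_\ell=0$ iff the level is empty); set $SS_\ell=0$ for integers $\ell\notin\mathcal L$. The level weight is $W_\ell=SS_\ell2^\ell$. For an integer global shift $G$, $A_\ell(G)=\lfloor W_\ell2^G\rfloor+1$ if $SS_\ell>0$ and $A_\ell(G)=0$ if $SS_\ell=0$; $A(G)=\sum_\ell A_\ell(G)$ and $M(G)=\sum_\ell W_\ell2^G$. The configuration is nonempty if $z\ge1$. Inter-level sampler (Algorithm 1), with shift $G$ and $A=A(G)$: it performs independent outer iterations. In an outer iteration, draw $x$ uniformly from $\{1,\dots,A\}$ and scan the levels in decreasing order starting from the largest nonempty level. At the current level $\ell$: if $x<A_\ell(G)$, return $\ell$; if $x=A_\ell(G)$, run the refinement loop for $m=1,2,\dots$: draw $r$ uniformly from $\{0,\dots,2^b-1\}$ independently, let $t=\lfloor SS_\ell 2^{\ell+G+mb}\rfloor \bmod 2^b$; if $r<t$ return $\ell$; else if $r>t$ or $\ell+G+mb\ge 0$, abandon this outer iteration and start a new one; otherwise continue with $m+1$. If $x>A_\ell(G)$,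 set $x\leftarrow x-A_\ell(G)$ and move to the next lower level. *)

(* Defs.v *)
From Stdlib Require Import Reals ZArith List Lia.
From Coquelicot Require Import Coquelicot.
Import ListNotations.
Open Scope R_scope.

(* A configuration: parameter b, levels lo, lo+1, ..., lo+N-1, and for each
   level a finite multiset (list) of significands. *)
Record config := Config {
  cb  : nat;
  clo : Z;
  cN  : nat;
  cms : Z -> list nat
}.

Definition levels (c : config) : list Z :=
  map (fun i => (clo c + Z.of_nat i)%Z) (seq 0 (cN c)).

Definition inL (c : config) (l : Z) : Prop :=
  (clo c <= l)%Z /\ (l < clo c + Z.of_nat (cN c))%Z.

Definition inLb (c : config) (l : Z) : bool :=
  andb (clo c <=? l)%Z (l <? clo c + Z.of_nat (cN c))%Z.

Fixpoint sumZ (l : list Z) : Z := match l with [] => 0%Z | x :: t => (x + sumZ t)%Z end.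
Fixpoint sumR (l : list R) : R := match l with [] => 0 | x :: t => x + sumR t end.

Definition SS (c : config) (l : Z) : Z :=
  if inLb c l then Z.of_nat (list_sum (cms c l)) else 0%Z.

Definition zcount (c : config) : nat :=
  list_sum (map (fun l => length (cms c l)) (levels c)).

Definition valid_config (c : config) : Prop :=
  (2 <= cb c)%nat /\
  (forall l, inL c l -> forall s, In s (cms c l) ->
       (2 ^ (cb c - 1) <= s < 2 ^ cb c)%nat) /\
  (zcount c < 2 ^ cb c)%nat.

Definition nonempty (c : config) : Prop := (1 <= zcount c)%nat.

Definition W (c : config) (l : Z) : R := IZR (SS c l) * powerRZ 2 l.

Definition Al (c : config) (G l : Z) : Z :=
  if (0 <? SS c l)%Z then (Int_part (W c l * powerRZ 2 G) + 1)%Z else 0%Z.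

Definition Atot (c : config) (G : Z) : Z := sumZ (map (Al c G) (levels c)).

Definition Mtot (c : config) (G : Z) : R :=
  sumR (map (fun l => W c l * powerRZ 2 G) (levels c)).

Fixpoint skip_empty (c : config) (ls : list Z) : list Z :=
  match ls with
  | [] => []
  | l :: t => if (0 <? SS c l)%Z then ls else skip_empty c t
  end.

Definition scan_order (c : config) : list Z := skip_empty c (rev (levels c)).

Inductive scan_res := SRet (l : Z) | SRef (l : Z) | SNone.

Fixpoint scan (c : config) (G x : Z) (ls : list Z) : scan_res :=
  match ls with
  | [] => SNone
  | l :: t =>
      if (x <? Al c G l)%Z then SRet l
      else if (x =? Al c G l)%Z then SRef l
      else scan c G (x - Al c G l)%Z t
  end.

Definition tdig (c : config) (G l m : Z) : Z :=
  Z.modulo (Int_part (IZR (SS c l) * powerRZ 2 (l + G + m * Z.of_nat (cb c))))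
           (2 ^ Z.of_nat (cb c)).

Definition unif_exp (K : nat) (f : nat -> R) : R :=
  sumR (map (fun r => / INR K * f r) (seq 0 K)).

(* n-step approximation of the probability that the refinement loop, started
   at step m for level l, returns l (least-fixed-point semantics of the loop) *)
Fixpoint refine_n (c : config) (G l : Z) (n : nat) (m : Z) : R :=
  match n with
  | O => 0
  | S n' =>
      unif_exp (2 ^ cb c) (fun r =>
        let t := tdig c G l m in
        if (Z.of_nat r <? t)%Z then 1
        else if orb (t <? Z.of_nat r)%Z (0 <=? l + G + m * Z.of_nat (cb c))%Z then 0
        else refine_n c G l n' (m + 1)%Z)
  end.

Definition refine_prob (c : config) (G l : Z) : R :=
  real (Lim_seq (fun n => refine_n c G l n 1%Z)).

(* probability that one outer iteration (x uniform in {1..A}) returns level l0 *)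
Definition accept_prob (c : config) (G l0 : Z) : R :=
  let A := Atot c G in
  sumR (map (fun i =>
     let x := (Z.of_nat i + 1)%Z in
     / IZR A *
     match scan c G x (scan_order c) with
     | SRet l => if (l =? l0)%Z then 1 else 0
     | SRef l => if (l =? l0)%Z then refine_prob c G l else 0
     | SNone => 0
     end) (seq 0 (Z.to_nat A))).

Definition accept_any_prob (c : config) (G : Z) : R :=
  let A := Atot c G in
  sumR (map (fun i =>
     let x := (Z.of_nat i + 1)%Z in
     / IZR A *
     match scan c G x (scan_order c) with
     | SRet _ => 1
     | SRef l => refine_prob c G l
     | SNone => 0
     end) (seq 0 (Z.to_nat A))).

(* Main.v *)
Require Import Defs.
From Stdlib Require Import Reals ZArith List Lia Lra FinFun.
From Coquelicot Require Import Coquelicot.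
Import ListNotations.
Open Scope R_scope.

Lemma sumR_app a b : sumR (a ++ b) = sumR a + sumR b.
Proof. induction a; simpl; [ring| rewrite IHa; ring]. Qed.

Lemma sumR_scal {A} (k:R) (f:A->R) s : sumR (map (fun x => k * f x) s) = k * sumR (map f s).
Proof. induction s; simpl; [ring| rewrite IHs; ring]. Qed.

Lemma sumR_ext {A} (f g:A->R) s : (forall x, In x s -> f x = g x) -> sumR (map f s) = sumR (map g s).
Proof. induction s; simpl; intros H; [ring|]. rewrite H by (simpl; auto). rewrite IHs by (intros; apply H; auto). ring. Qed.

Lemma sumR_const {A} (f:A->R) s v : (forall x, In x s -> f x = v) -> sumR (map f s) = INR (length s) * v.
Proof. induction s; intros H; cbn -[INR]; [simpl; ring|]. rewrite H by (simpl; auto). rewrite IHs by (intros; apply H; simpl; auto).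
  rewrite S_INR. ring. Qed.

Lemma sumR_shift (f : nat -> R) a r d : sumR (map f (seq (a+d) r)) = sumR (map (fun j => f (a+j)%nat) (seq d r)).
Proof. revert d; induction r; intros d; simpl; [ring|].
  replace (S (a+d)) with (a + S d)%nat by lia. rewrite IHr. ring. Qed.

Lemma Int_part_spec r : IZR (Int_part r) <= r < IZR (Int_part r) + 1.
Proof. destruct (base_Int_part r). lra. Qed.

Lemma Int_part_unique r z : IZR z <= r < IZR z + 1 -> Int_part r = z.
Proof. intros [H1 H2]. destruct (Int_part_spec r) as [H3 H4].
 assert (Int_part r < z+1)%Z by (apply lt_IZR; rewrite plus_IZR; lra).
 assert (z < Int_part r + 1)%Z by (apply lt_IZR; rewrite plus_IZR; lra). lia. Qed.

Lemma Int_part_le z r : IZR z <= r -> (z <= Int_part r)%Z.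
Proof. intros H. destruct (Int_part_spec r).
 assert (z < Int_part r + 1)%Z by (apply lt_IZR; rewrite plus_IZR; lra). lia. Qed.

Definition fr (r : R) := r - IZR (Int_part r).

Lemma fr_int z : fr (IZR z) = 0.
Proof. unfold fr. rewrite (Int_part_unique (IZR z) z) by lra. ring. Qed.

Lemma digit_id (B:Z) y : (0<B)%Z ->
  (0 <= Int_part (IZR B * y) mod B < B)%Z /\
  IZR B * fr y = fr (IZR B * y) + IZR (Int_part (IZR B * y) mod B).
Proof.
  intros HB. unfold fr. set (f := Int_part y). set (g := Int_part (IZR B * y)).
  destruct (Int_part_spec y) as [H1 H2]. fold f in H1, H2.
  destruct (Int_part_spec (IZR B * y)) as [H3 H4]. fold g in H3, H4.
  assert (HB' : 0 < IZR B) by (apply IZR_lt; lia).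
  assert (Hle : (B * f <= g)%Z).
  { apply Int_part_le. rewrite mult_IZR. apply Rmult_le_compat_l; lra. }
  assert (Hlt : (g < B * f + B)%Z).
  { apply lt_IZR. rewrite plus_IZR, mult_IZR.
    assert (IZR B * y < IZR B * (IZR f + 1)) by (apply Rmult_lt_compat_l; lra). lra. }
  assert (Hm : (g mod B = g - B * f)%Z).
  { replace g with ((g - B*f) + f * B)%Z at 1 by ring. rewrite Z_mod_plus_full.
    apply Z.mod_small. lia. }
  rewrite Hm. split; [lia|]. rewrite minus_IZR, mult_IZR. ring.
Qed.

Lemma powerRZ2_nat n : powerRZ 2 (Z.of_nat n) = IZR (2 ^ Z.of_nat n).
Proof. rewrite <- pow_powerRZ. change (2 ^ Z.of_nat n)%Z with (Z.of_nat 2 ^ Z.of_nat n)%Z.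
  rewrite <- Nat2Z.inj_pow, <- INR_IZR_INZ, pow_INR. simpl. f_equal. Qed.

Lemma powerRZ2_Z p : (0 <= p)%Z -> powerRZ 2 p = IZR (2 ^ p).
Proof. intros H. rewrite <- (Z2Nat.id p H). apply powerRZ2_nat. Qed.

Lemma unif_sum K t (s:bool) v : (0 <= t)%Z ->
  sumR (map (fun r => if (Z.of_nat r <? t)%Z then 1 else if orb (t <? Z.of_nat r)%Z s then 0 else v) (seq 0 K))
  = IZR (Z.min t (Z.of_nat K)) + (if andb (t <? Z.of_nat K)%Z (negb s) then v else 0).
Proof.
  intros Ht. induction K.
  - simpl. replace (Z.min t 0) with 0%Z by lia.
    destruct (t <? 0)%Z eqn:E; [apply Z.ltb_lt in E; lia|]. simpl. ring.
  - rewrite seq_S, map_app, sumR_app, IHK. simpl sumR. try rewrite Nat.add_0_l.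
    destruct (Z.ltb_spec (Z.of_nat K) t).
    + replace (Z.min t (Z.of_nat K)) with (Z.of_nat K) by lia.
      replace (Z.min t (Z.of_nat (S K))) with (Z.of_nat K + 1)%Z by lia.
      destruct (Z.ltb_spec t (Z.of_nat K)); [lia|].
      destruct (Z.ltb_spec t (Z.of_nat (S K))); [lia|]. simpl. rewrite plus_IZR. ring.
    + destruct (Z.ltb_spec t (Z.of_nat K)).
      * replace (Z.min t (Z.of_nat K)) with t by lia.
        replace (Z.min t (Z.of_nat (S K))) with t by lia.
        destruct (Z.ltb_spec t (Z.of_nat (S K))); [|lia]. simpl. ring.
      * assert (t = Z.of_nat K) by lia. subst t.
        replace (Z.min (Z.of_nat K) (Z.of_nat K)) with (Z.of_nat K) by lia.
        replace (Z.min (Z.of_nat K) (Z.of_nat (S K))) with (Z.of_nat K) by lia.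
        destruct (Z.ltb_spec (Z.of_nat K) (Z.of_nat (S K))); [|lia].
        destruct s; simpl; ring.
Qed.

Lemma unif_step K t (s:bool) v : (0 <= t < Z.of_nat K)%Z ->
  unif_exp K (fun r => if (Z.of_nat r <? t)%Z then 1 else if orb (t <? Z.of_nat r)%Z s then 0 else v)
  = / INR K * (IZR t + if s then 0 else v).
Proof.
  intros Ht. unfold unif_exp. rewrite sumR_scal, unif_sum by lia. f_equal.
  replace (Z.min t (Z.of_nat K)) with t by lia.
  destruct (Z.ltb_spec t (Z.of_nat K)); [|lia]. destruct s; simpl; ring.
Qed.

Section Refine.
Variable c : config.
Variable G l : Z.
Hypothesis Hb : (1 <= cb c)%nat.

Let bz := Z.of_nat (cb c).
Let B := (2 ^ bz)%Z.

Lemma B_pos : (0 < B)%Z.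
Proof. unfold B. apply Z.pow_pos_nonneg; lia. Qed.

Lemma INR_B : INR (2 ^ cb c) = IZR B.
Proof. rewrite INR_IZR_INZ, Nat2Z.inj_pow. reflexivity. Qed.

Lemma pw_split p : powerRZ 2 p = IZR B * powerRZ 2 (p - bz).
Proof. unfold B, bz. rewrite <- powerRZ2_nat, <- powerRZ_add by lra. f_equal. lia. Qed.

Definition Yv (m : Z) := IZR (SS c l) * powerRZ 2 (l + G + m * bz - bz).

Lemma tdig_eq m : tdig c G l m = (Int_part (IZR B * Yv m) mod B)%Z.
Proof. unfold tdig, Yv. fold bz. fold B. f_equal. f_equal.
  rewrite (pw_split (l + G + m * bz)). ring. Qed.

Lemma refine_stop m n : (0 <= l + G + m * bz)%Z -> refine_n c G l (S n) m = fr (Yv m).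
Proof.
  intros Hp. cbn [refine_n]. rewrite tdig_eq.
  destruct (digit_id B (Yv m) B_pos) as [Ht Hid].
  assert (HK : Z.of_nat (2 ^ cb c) = B) by (rewrite Nat2Z.inj_pow; reflexivity).
  rewrite unif_step by (rewrite HK; exact Ht).
  rewrite INR_B. fold bz. destruct (Z.leb_spec 0 (l + G + m * bz)); [|lia].
  assert (HBm : IZR B * Yv m = IZR (SS c l * 2 ^ (l + G + m * bz))).
  { unfold Yv. rewrite mult_IZR, <- powerRZ2_Z by lia. rewrite (pw_split (l+G+m*bz)). ring. }
  rewrite HBm in Hid |- *. rewrite fr_int in Hid.
  assert (0 < IZR B) by (apply IZR_lt; apply B_pos).
  apply (Rmult_eq_reg_l (IZR B)); [|lra]. rewrite Hid. field. lra.
Qed.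

Lemma refine_go m n : (l + G + m * bz < 0)%Z ->
  refine_n c G l (S n) m = / IZR B * (IZR (tdig c G l m) + refine_n c G l n (m+1)).
Proof.
  intros Hp. cbn [refine_n]. rewrite tdig_eq.
  destruct (digit_id B (Yv m) B_pos) as [Ht Hid].
  assert (HK : Z.of_nat (2 ^ cb c) = B) by (rewrite Nat2Z.inj_pow; reflexivity).
  rewrite unif_step by (rewrite HK; exact Ht).
  rewrite INR_B. fold bz. destruct (Z.leb_spec 0 (l + G + m * bz)); [lia|]. reflexivity.
Qed.

Lemma Yv_succ m : Yv (m + 1) = IZR B * Yv m.
Proof. unfold Yv. rewrite (pw_split (l + G + (m+1) * bz - bz)). 
  replace (l + G + (m + 1) * bz - bz - bz)%Z with (l + G + m * bz - bz)%Z by ring. ring. Qed.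

Lemma refine_main k : forall m n, (0 <= l + G + (m + Z.of_nat k) * bz)%Z -> (k < n)%nat ->
  refine_n c G l n m = fr (Yv m).
Proof.
  induction k; intros m n Hp Hn; (destruct n as [|n]; [lia|]).
  - apply refine_stop. lia.
  - destruct (Z.leb_spec 0 (l + G + m * bz)). { apply refine_stop. lia. }
    rewrite refine_go by lia. rewrite IHk by lia.
    destruct (digit_id B (Yv m) B_pos) as [Ht Hid].
    rewrite Yv_succ. rewrite tdig_eq.
    assert (0 < IZR B) by (apply IZR_lt; apply B_pos).
    apply (Rmult_eq_reg_l (IZR B)); [|lra]. rewrite Hid. field. lra.
Qed.

Lemma refine_prob_eq : refine_prob c G l = fr (IZR (SS c l) * powerRZ 2 (l + G)).
Proof.
  unfold refine_prob.
  set (k := Z.to_nat (- (l + G))).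
  rewrite (Lim_seq_ext_loc _ (fun _ => fr (Yv 1))).
  - rewrite Lim_seq_const. simpl. unfold Yv. do 3 f_equal. lia.
  - exists (S k). intros n Hn. apply (refine_main k). 
    + unfold k. assert (1 <= bz)%Z by (unfold bz; lia). nia.
    + lia.
Qed.
End Refine.

Lemma SS_ge0 c l : (0 <= SS c l)%Z.
Proof. unfold SS. destruct (inLb c l); lia. Qed.

Lemma Al_ge0 c G l : (0 <= Al c G l)%Z.
Proof.
  unfold Al. destruct (Z.ltb_spec 0 (SS c l)); [|lia].
  assert (0 <= W c l * powerRZ 2 G).
  { unfold W. assert (0 < powerRZ 2 l) by (apply powerRZ_lt; lra).
    assert (0 < powerRZ 2 G) by (apply powerRZ_lt; lra).
    assert (0 <= IZR (SS c l)) by (apply IZR_le; lia).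
    apply Rmult_le_pos; [apply Rmult_le_pos|]; lra. }
  assert (0 <= Int_part (W c l * powerRZ 2 G))%Z by (apply Int_part_le; simpl; lra). lia.
Qed.

Lemma Al_pos c G l : (0 <? SS c l)%Z = true -> (0 < Al c G l)%Z.
Proof.
  intros E. unfold Al. rewrite E. apply Z.ltb_lt in E.
  assert (0 <= W c l * powerRZ 2 G).
  { unfold W. assert (0 < powerRZ 2 l) by (apply powerRZ_lt; lra).
    assert (0 < powerRZ 2 G) by (apply powerRZ_lt; lra).
    assert (0 <= IZR (SS c l)) by (apply IZR_le; lia).
    apply Rmult_le_pos; [apply Rmult_le_pos|]; lra. }
  assert (0 <= Int_part (W c l * powerRZ 2 G))%Z by (apply Int_part_le; simpl; lra). lia.
Qed.

Lemma sumZ_ge0 c G ls : (0 <= sumZ (map (Al c G) ls))%Z.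
Proof. induction ls; simpl; [lia|]. pose proof (Al_ge0 c G a). lia. Qed.

Lemma scan_sum c G (F : scan_res -> R) ls :
  sumR (map (fun i => F (scan c G (Z.of_nat i + 1) ls)) (seq 0 (Z.to_nat (sumZ (map (Al c G) ls)))))
  = sumR (map (fun l => if (0 <? Al c G l)%Z then (IZR (Al c G l) - 1) * F (SRet l) + F (SRef l) else 0) ls).
Proof.
  induction ls as [|l t IH]; [reflexivity|].
  cbn [map sumZ sumR].
  pose proof (Al_ge0 c G l) as H0. pose proof (sumZ_ge0 c G t) as H1.
  set (a := Z.to_nat (Al c G l)).
  assert (Ha : Al c G l = Z.of_nat a) by (unfold a; lia).
  rewrite Z2Nat.inj_add by lia. fold a.
  rewrite seq_app, map_app, sumR_app.
  replace (0 + a)%nat with (a + 0)%nat by lia. rewrite (sumR_shift _ a _ 0).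
  rewrite (sumR_ext _ (fun j => F (scan c G (Z.of_nat j + 1) t)) (seq 0 (Z.to_nat (sumZ (map (Al c G) t))))).
  2:{ intros j _. cbn [scan]. rewrite Ha.
      destruct (Z.ltb_spec (Z.of_nat (a + j) + 1) (Z.of_nat a)); [lia|].
      destruct (Z.eqb_spec (Z.of_nat (a + j) + 1) (Z.of_nat a)); [lia|].
      replace (Z.of_nat (a + j) + 1 - Z.of_nat a)%Z with (Z.of_nat j + 1)%Z by lia; reflexivity. }
  rewrite IH. f_equal. rewrite Ha.
  destruct a as [|a'].
  - simpl. reflexivity.
  - destruct (Z.ltb_spec 0 (Z.of_nat (S a'))); [|lia].
    rewrite seq_S, map_app, sumR_app.
    rewrite (sumR_const _ _ (F (SRet l))).
    2:{ intros i Hi. apply in_seq in Hi. cbn [scan]. rewrite Ha.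
        destruct (Z.ltb_spec (Z.of_nat i + 1) (Z.of_nat (S a'))); [reflexivity|lia]. }
    cbn [map sumR]. cbn [scan]. rewrite Ha.
    destruct (Z.ltb_spec (Z.of_nat (0 + a') + 1) (Z.of_nat (S a'))); [lia|].
    destruct (Z.eqb_spec (Z.of_nat (0 + a') + 1) (Z.of_nat (S a'))); [|lia].
    rewrite length_seq, <- INR_IZR_INZ, S_INR. ring.
Qed.

Lemma sumR_rev (h : Z -> R) ls : sumR (map h (rev ls)) = sumR (map h ls).
Proof. induction ls; simpl; [ring|]. rewrite map_app, sumR_app, IHls. simpl. ring. Qed.

Lemma sumZ_app a b : sumZ (a ++ b) = (sumZ a + sumZ b)%Z.
Proof. induction a; simpl; [ring| rewrite IHa; ring]. Qed.

Lemma sumZ_rev (h : Z -> Z) ls : sumZ (map h (rev ls)) = sumZ (map h ls).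
Proof. induction ls; simpl; [ring|]. rewrite map_app, sumZ_app, IHls. simpl. ring. Qed.

Lemma skip_sum c (h : Z -> R) ls : (forall l, (0 <? SS c l)%Z = false -> h l = 0) ->
  sumR (map h (skip_empty c ls)) = sumR (map h ls).
Proof. intros H. induction ls; simpl; [reflexivity|].
  destruct (0 <? SS c a)%Z eqn:E; [reflexivity|]. rewrite IHls, H by auto. ring. Qed.

Lemma skip_sumZ c G ls : sumZ (map (Al c G) (skip_empty c ls)) = sumZ (map (Al c G) ls).
Proof. induction ls; simpl; [reflexivity|].
  destruct (0 <? SS c a)%Z eqn:E; [reflexivity|]. rewrite IHls. unfold Al at 2. rewrite E. ring. Qed.

Lemma Atot_scan c G : Atot c G = sumZ (map (Al c G) (scan_order c)).
Proof. unfold Atot, scan_order. rewrite skip_sumZ, sumZ_rev. reflexivity. Qed.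

Lemma W_zero c l : (0 <? SS c l)%Z = false -> W c l = 0.
Proof. intros E. unfold W. pose proof (SS_ge0 c l).
  destruct (Z.ltb_spec 0 (SS c l)); [discriminate|]. replace (SS c l) with 0%Z by lia. simpl. ring. Qed.

Lemma scan_order_sum c (h : Z -> R) : (forall l, (0 <? SS c l)%Z = false -> h l = 0) ->
  sumR (map h (scan_order c)) = sumR (map h (levels c)).
Proof. intros H. unfold scan_order. rewrite skip_sum by auto. apply sumR_rev. Qed.

Lemma key_term c G l : (1 <= cb c)%nat -> (0 < Al c G l)%Z ->
  IZR (Al c G l) - 1 + refine_prob c G l = W c l * powerRZ 2 G.
Proof.
  intros Hb HA. rewrite refine_prob_eq by auto. unfold fr.
  assert (Hw : W c l * powerRZ 2 G = IZR (SS c l) * powerRZ 2 (l + G)).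
  { unfold W. rewrite powerRZ_add by lra. ring. }
  rewrite <- Hw. unfold Al in *. destruct (0 <? SS c l)%Z; [|lia].
  rewrite plus_IZR. simpl. ring.
Qed.

Lemma sum_single (v : Z -> R) s l0 : NoDup s -> In l0 s ->
  sumR (map (fun l => if (l =? l0)%Z then v l else 0) s) = v l0.
Proof.
  induction s as [|a s IH]; intros Hn Hi; [destruct Hi|].
  inversion Hn as [|? ? Hna Hns]; subst. simpl.
  destruct (Z.eqb_spec a l0).
  - subst. rewrite (sumR_const _ _ 0). { ring. }
    intros x Hx. destruct (Z.eqb_spec x l0); [subst; contradiction|reflexivity].
  - destruct Hi as [Hi|Hi]; [congruence|]. rewrite IH by auto. ring.
Qed.

Lemma levels_nodup c : NoDup (levels c).
Proof. unfold levels. apply Injective_map_NoDup; [|apply seq_NoDup].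
  intros x y H. lia. Qed.

Lemma levels_in c l : inL c l -> In l (levels c).
Proof. intros [H1 H2]. unfold levels. apply in_map_iff.
  exists (Z.to_nat (l - clo c)). split; [lia|]. apply in_seq. lia. Qed.

Theorem mainTheorem2 (c : config) (G : Z) :
  valid_config c -> nonempty c ->
  (forall l : Z, inL c l ->
     accept_prob c G l = W c l * powerRZ 2 G / IZR (Atot c G)) /\
  accept_any_prob c G = Mtot c G / IZR (Atot c G).
Proof.
  intros [Hb _] _. assert (Hb1 : (1 <= cb c)%nat) by lia.
  split.
  - intros l0 Hl0. unfold accept_prob. rewrite sumR_scal.
    rewrite Atot_scan.
    pose proof (scan_sum c G (fun res => match res with
       | SRet l => if (l =? l0)%Z then 1 else 0
       | SRef l => if (l =? l0)%Z then refine_prob c G l else 0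
       | SNone => 0 end) (scan_order c)) as E.
    cbv beta in E. rewrite E. clear E.
    rewrite (sumR_ext _ (fun l => if (l =? l0)%Z then W c l * powerRZ 2 G else 0)).
    2:{ intros l _. destruct (Z.ltb_spec 0 (Al c G l)) as [HA|HA].
        - rewrite <- (key_term c G l Hb1 HA). destruct (l =? l0)%Z; ring.
        - destruct (0 <? SS c l)%Z eqn:ES.
          + pose proof (Al_pos c G l ES). lia.
          + rewrite W_zero by auto. destruct (l =? l0)%Z; ring. }
    rewrite scan_order_sum.
    2:{ intros l El. rewrite W_zero by auto. destruct (l =? l0)%Z; ring. }
    rewrite sum_single by (auto using levels_nodup, levels_in).
    rewrite <- Atot_scan. unfold Rdiv. ring.
  - unfold accept_any_prob. rewrite sumR_scal.
    rewrite Atot_scan.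
    pose proof (scan_sum c G (fun res => match res with
       | SRet l => 1
       | SRef l => refine_prob c G l
       | SNone => 0 end) (scan_order c)) as E.
    cbv beta in E. rewrite E. clear E.
    rewrite (sumR_ext _ (fun l => W c l * powerRZ 2 G)).
    2:{ intros l _. destruct (Z.ltb_spec 0 (Al c G l)) as [HA|HA].
        - rewrite <- (key_term c G l Hb1 HA). ring.
        - destruct (0 <? SS c l)%Z eqn:ES.
          + pose proof (Al_pos c G l ES). lia.
          + rewrite W_zero by auto. ring. }
    rewrite scan_order_sum.
    2:{ intros l El. rewrite W_zero by auto. ring. }
    rewrite <- Atot_scan. unfold Mtot, Rdiv. ring.
Qed.
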